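(* Let $G$ be a graph whose twin graph $G^*$ is isomorphic to $K_1+P_4$, where the degree-4 vertex is of any type and the other four vertices are of type (1K); furthermore, no two non-adjacent vertices of $G^*$ are both of type (K), and no two adjacent vertices of $G^*$ are such that one is of type (K) and the other of type (N). Then $D(G)\neq n(G)-2$.
   Context: All graphs are finite and simple; $n(G)=|V(G)|$; $N_G(u)$ is the neighborhood of $u$; $P_4$ is the path on four vertices and the join $G+H$ is obtained from the disjoint union of $G$ and $H$ by adding all edges between $V(G)$ and $V(H)$. A distinguishing coloring of a graph $G$ is a (not necessarily proper) vertex coloring such that the only automorphism of $G$ mapping every vertex to a vertex of the same color is the identity; the distinguishing number $D(G)$ is the minimum number of colors in a distinguishing coloring of $G$. Two distinct vertices $u,v$ are twins if $N_G(u)\setminus\{v\}=N_G(v)\setminus\{u\}$. The relation $u\equiv v$ iff $u=v$ or $u,v$ are twins is an equivalence relation; the class of $v$ is denoted $v^*$. The twin graph $G^*$ has the equivalence classes as vertices, distinct classes $u^*,v^*$ being adjacent iff $uv\in E(G)$. Each class induces a complete or an edgeless graph. A class $v^*$ is of type (1) if $|v^*|=1$, of type (K) if $|v^*|\ge 2$ and it induces a complete graph, and of type (N) if $|v^*|\ge2$ and it induces an edgeless graph; type (1K) means type (1) or (K), type (1N) means (1) or (N), and type (KN) means (K) or (N). *)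

(* Defs.v *)
From mathcomp Require Import all_boot all_fingroup.
Set Implicit Arguments. Unset Strict Implicit. Unset Printing Implicit Defensive.

Section Graphs.
Variables (T : finType) (e : rel T).

(* u, v distinct twins: N(u)\{v} = N(v)\{u}  (for simple graphs this means
   e u w = e v w for every w outside {u,v}) *)
Definition twins (u v : T) : bool :=
  (u != v) && [forall w, ((w != u) && (w != v)) ==> (e u w == e v w)].

Definition tclass (v : T) : {set T} := [set u | (u == v) || twins u v].

Definition twin_classes : {set {set T}} := [set tclass v | v in T].

Definition twin_adj (A B : {set T}) : bool :=
  (A != B) && [exists u in A, exists v in B, e u v].

Definition type_1 (A : {set T}) : bool := #|A| == 1.
Definition type_K (A : {set T}) : bool :=
  (2 <= #|A|) && [forall u in A, forall v in A, (u != v) ==> e u v].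
Definition type_N (A : {set T}) : bool :=
  (2 <= #|A|) && [forall u in A, forall v in A, ~~ e u v].

Definition is_aut (p : {perm T}) : bool :=
  [forall x, forall y, e (p x) (p y) == e x y].

Definition distinguishing (k : nat) (c : T -> 'I_k) : bool :=
  [forall p : {perm T}, (is_aut p && [forall x, c (p x) == c x]) ==> (p == 1%g)].

Definition has_dist_coloring (k : nat) : bool :=
  [exists c : {ffun T -> 'I_k}, distinguishing c].

(* D(G): least k admitting a distinguishing coloring with k colors
   (k = #|T| always works, so the search range 0..#|T| suffices) *)
Definition dist_number : nat := find has_dist_coloring (iota 0 #|T|.+1).

End Graphs.

(* K_1 + P_4 on 'I_5: vertex 0 is the K_1, vertices 1-2-3-4 form the path *)
Definition K1P4_adj (i j : 'I_5) : bool :=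
  (i != j) && [|| i == 0 :> nat, j == 0 :> nat, i.+1 == j | j.+1 == i].

(* Main.v *)
Require Import Defs.
From mathcomp Require Import all_boot all_fingroup.
From mathcomp Require Import zify.
Set Implicit Arguments. Unset Strict Implicit. Unset Printing Implicit Defensive.

Definition Rt (T : finType) (e : rel T) u v := (u == v) || twins e u v.

Lemma twinsP (T : finType) (e : rel T) u v :
  reflect ((u != v) /\ forall w, w != u -> w != v -> e u w = e v w) (twins e u v).
Proof.
apply: (iffP andP) => [[H1 /forallP H2]|[H1 H2]]; split=> //.
- move=> w Hu Hv; apply/eqP; move/implyP: (H2 w); apply; by rewrite Hu Hv.
- apply/forallP=> w; apply/implyP=> /andP[Hu Hv]; by rewrite H2.
Qed.

Lemma twins_sym (T : finType) (e : rel T) u v : twins e u v -> twins e v u.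
Proof.
move/twinsP=> [H1 H2]; apply/twinsP; split; first by rewrite eq_sym.
move=> w Hv Hu; by rewrite H2.
Qed.

Lemma Rt_refl (T : finType) (e : rel T) u : Rt e u u.
Proof. by rewrite /Rt eqxx. Qed.

Lemma Rt_sym (T : finType) (e : rel T) u v : Rt e u v -> Rt e v u.
Proof. rewrite /Rt; case/orP => [/eqP->|/twins_sym ->]; by rewrite ?eqxx ?orbT. Qed.

Lemma Rt_trans (T : finType) (e : rel T) (esym : symmetric e) x y z :
  Rt e x y -> Rt e y z -> Rt e x z.
Proof.
rewrite /Rt. case/orP=> [/eqP->//|Hxy]. case/orP=> [/eqP<-|Hyz]; first by rewrite Hxy orbT.
case: (eqVneq x z) => [//|Hxz] /=. apply/twinsP; split => // w Hwx Hwz.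
move/twinsP: Hxy => [Hxy1 Hxy2]; move/twinsP: Hyz => [Hyz1 Hyz2].
case: (eqVneq w y) => [->|Hwy].
- have h1 : e x z = e y z by apply: Hxy2; rewrite eq_sym.
  have h2 := Hyz2 x Hxy1 Hxz.
  by rewrite (esym x y) h2 (esym z x) h1 (esym y z).
- by rewrite Hxy2 // Hyz2.
Qed.

Arguments Rt_trans {T e} esym {x y z}.
Arguments Rt_sym {T e u v}.
Lemma memt (T : finType) (e : rel T) u v : (u \in tclass e v) = Rt e u v.
Proof. by rewrite inE. Qed.

Lemma tclass_eq (T : finType) (e : rel T) (esym : symmetric e) a b :
  Rt e a b -> tclass e a = tclass e b.
Proof.
move=> H; apply/setP=> u; rewrite !memt; apply/idP/idP => H'.
- exact (Rt_trans esym H' H).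
- exact (Rt_trans esym H' (Rt_sym H)).
Qed.

Lemma adjA (T : finType) (e : rel T) (esym : symmetric e) u v a b :
  Rt e u a -> Rt e v b -> ~~ Rt e a b -> e u v = e a b.
Proof.
move=> Hua Hvb Hab.
have Huv : ~~ Rt e u v.
  apply: contra Hab => H. exact (Rt_trans esym (Rt_trans esym (Rt_sym Hua) H) Hvb).
have Hva : v != a by apply/eqP=> Hva; move: Hab; rewrite -Hva Hvb.
have Hvu : v != u by apply/eqP=> Hvu; move: Huv; rewrite Hvu Rt_refl.
have step1 : e u v = e a v.
  case/orP: Hua => [/eqP->//|/twinsP [_ H]]. exact: H.
have Hab' : a != b by apply/eqP=> E; move: Hab; rewrite E Rt_refl.
have Hav : a != v by rewrite eq_sym.
have step2 : e v a = e b a.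
  case/orP: Hvb => [/eqP->//|/twinsP [_ H]]. exact: H.
by rewrite step1 (esym a v) step2 esym.
Qed.

Definition o0 : 'I_5 := @Ordinal 5 0 isT.
Definition o1 : 'I_5 := @Ordinal 5 1 isT.
Definition o2 : 'I_5 := @Ordinal 5 2 isT.
Definition o3 : 'I_5 := @Ordinal 5 3 isT.
Definition o4 : 'I_5 := @Ordinal 5 4 isT.


Definition adjN (a b : nat) : bool := (a != b) && [|| a == 0, b == 0, a.+1 == b | b.+1 == a].

Lemma K1P4_adjN (i j : 'I_5) : K1P4_adj i j = adjN i j.
Proof. by []. Qed.

Definition I5 := iota 0 5.

Lemma K1P4_rigid (s : 'I_5 -> 'I_5) : s o1 = o1 ->
  (forall i j, K1P4_adj (s i) (s j) = K1P4_adj i j) -> forall i, s i = i.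
Proof.
have B : all (fun a => all (fun b => all (fun c => all (fun d => all (fun f =>
   [&& b == 1, adjN a b == adjN 0 1, adjN a c == adjN 0 2,
       adjN a d == adjN 0 3, adjN a f == adjN 0 4,
       adjN b c == adjN 1 2, adjN b d == adjN 1 3,
       adjN b f == adjN 1 4, adjN c d == adjN 2 3,
       adjN c f == adjN 2 4 & adjN d f == adjN 3 4]
   ==> [&& a == 0, c == 2, d == 3 & f == 4]) I5) I5) I5) I5) I5 by vm_compute.
move=> H1 H.
have inI : forall i : 'I_5, val i \in I5 by move=> i; rewrite mem_iota /= ltn_ord.
move/allP: B => /(_ _ (inI (s o0))) /allP/(_ _ (inI (s o1))) /allP/(_ _ (inI (s o2))) /allP/(_ _ (inI (s o3)))
  /allP/(_ _ (inI (s o4))) /implyP.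
have E : forall i j, adjN (s i) (s j) = adjN i j by move=> i j; rewrite -!K1P4_adjN H.
rewrite !E H1 !eqxx => /(_ isT) /and4P [/eqP a /eqP c /eqP d /eqP f].
move=> [[|[|[|[|[|m]]]]] Hm] //; apply: val_inj => //=.
- by rewrite (_ : Ordinal Hm = o0) //; apply: val_inj.
- by rewrite (_ : Ordinal Hm = o1) ?H1 //; apply: val_inj.
- by rewrite (_ : Ordinal Hm = o2) //; apply: val_inj.
- by rewrite (_ : Ordinal Hm = o3) //; apply: val_inj.
- by rewrite (_ : Ordinal Hm = o4) //; apply: val_inj.
Qed.

Theorem lemma4p9 (T : finType) (e : rel T)
  (e_sym : symmetric e) (e_irr : irreflexive e)
  (g : 'I_5 -> {set T})
  (g_inj : injective g)
  (g_onto : [set g i | i : 'I_5] = twin_classes e)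
  (g_iso : forall i j, twin_adj e (g i) (g j) = K1P4_adj i j)
  (h1K : forall i : 'I_5, i != 0 :> nat -> type_1 (g i) || type_K e (g i))
  (hKK : forall i j, i != j -> ~~ K1P4_adj i j ->
           ~~ (type_K e (g i) && type_K e (g j)))
  (hKN : forall i j, K1P4_adj i j -> ~~ (type_K e (g i) && type_N e (g j))) :
  dist_number e <> #|T| - 2.
Proof.
set n := #|T|.
have Hcl : forall i, exists v, g i = tclass e v.
  move=> i; have : g i \in twin_classes e by rewrite -g_onto; apply: imset_f.
  by case/imsetP => v _ ->; exists v.
have [r Hr] : exists r : 'I_5 -> T, forall i, g i = tclass e (r i).
  have [x0 _] := Hcl o0.
  exists (fun i => odflt x0 [pick v | g i == tclass e v]) => i /=.
  case: pickP => [v /eqP //|H]. have [v Hv] := Hcl i; by move: (H v); rewrite Hv eqxx.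
have rin : forall i, r i \in g i by move=> i; rewrite Hr memt Rt_refl.
have r_inj : injective r by move=> i j Eij; apply: g_inj; rewrite !Hr Eij.
have Radj : forall i j, e (r i) (r j) = K1P4_adj i j.
  move=> i j; case: (eqVneq i j) => [<-|Hij]; first by rewrite e_irr /K1P4_adj eqxx.
  have Hg : g i != g j by apply: (contra_neq (@g_inj i j)).
  have nR : ~~ Rt e (r i) (r j).
    by apply: contra Hg => H; rewrite !Hr (tclass_eq e_sym H).
  rewrite -g_iso /twin_adj Hg /=; apply/idP/idP.
  - move=> H; apply/existsP; exists (r i); rewrite rin /=; apply/existsP; exists (r j).
    by rewrite rin.
  - case/existsP=> u /andP [Hu /existsP [v /andP [Hv Huv]]].
    rewrite Hr memt in Hu; rewrite Hr memt in Hv.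
    by rewrite -(adjA e_sym Hu Hv nR).
have n5 : 5 <= n by have := leq_card _ r_inj; rewrite card_ord.
set R5 := [set r i | i : 'I_5].
set s := enum (~: R5).
have sz : size s = n - 5.
  rewrite -cardE; have := cardsCs R5; rewrite card_imset // card_ord -/n. lia.
pose c' x := if x == r o1 then 0 else if x \in R5 then 1 else (index x s).+2.
have inR5 : forall i, r i \in R5 by move=> i; apply/imsetP; exists i.
have Hle : forall x, (c' x <= 1) = (x \in R5).
  move=> x; rewrite /c'; case: ifP => [/eqP->|_]; first by rewrite inR5.
  by case: ifP.
have Hlt : forall x, c' x < n - 3.
  move=> x; rewrite /c'; case: ifP=> _; first lia.
  case: ifP => Hx; first lia.
  have : index x s < size s by rewrite index_mem mem_enum inE Hx.
  rewrite sz; lia.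
have Hcol : has_dist_coloring e (n - 3).
  apply/existsP; exists [ffun x => Ordinal (Hlt x)].
  apply/forallP => p; apply/implyP => /andP [/forallP Haut /forallP Hc].
  have Hc' : forall x, c' (p x) = c' x.
    by move=> x; move: (Hc x); rewrite !ffunE => /eqP/(congr1 val).
  have Haut' : forall x y, e (p x) (p y) = e x y.
    by move=> x y; move/forallP: (Haut x) => /(_ y) /eqP.
  have fixN : forall x, x \notin R5 -> p x = x.
    move=> x Hx.
    have Hpx : p x \notin R5 by rewrite -Hle Hc' Hle.
    have := Hc' x; rewrite /c' (negbTE Hx) (negbTE Hpx).
    have -> : (x == r o1) = false by apply/negbTE; apply: contraNneq Hx => ->.
    have -> : (p x == r o1) = false by apply/negbTE; apply: contraNneq Hpx => ->.
    move=> [] Ei.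
    rewrite -(nth_index x (s := s) (x := p x)); last by rewrite mem_enum inE.
    by rewrite Ei nth_index // mem_enum inE.
  have repR : forall i, p (r i) \in R5 by move=> i; rewrite -Hle Hc' Hle.
  have [sg Hsg] : exists sg : 'I_5 -> 'I_5, forall i, p (r i) = r (sg i).
    exists (fun i => odflt i [pick j | p (r i) == r j]) => i /=.
    case: pickP => [j /eqP //|H]. case/imsetP: (repR i) => j _ E.
    by move: (H j); rewrite E eqxx.
  have sg1 : sg o1 = o1.
    apply: r_inj; rewrite -Hsg.
    move: (Hc' (r o1)); rewrite /c' eqxx; case: ifP => [/eqP//|_]; by case: ifP.
  have sgadj : forall i j, K1P4_adj (sg i) (sg j) = K1P4_adj i j.
    by move=> i j; rewrite -!Radj -!Hsg Haut'.
  have sgid := K1P4_rigid sg1 sgadj.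
  apply/eqP/permP => x; rewrite perm1.
  case: (boolP (x \in R5)) => [/imsetP [i _ ->]| /fixN //].
  by rewrite Hsg sgid.
have Hfind : dist_number e <= n - 3.
  rewrite leqNgt; apply/negP => H.
  have := before_find 0 H; rewrite nth_iota; last lia.
  by rewrite add0n Hcol.
lia.
Qed.
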